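(* Consider the queueing system in the context under MaxWeight with a diagonal matrix $\Delta$ with positive diagonal entries, in overload ($\rho\notin\mathcal{P}$), and let $\eta=\lim_{t\to\infty}X(t)/t$. Then $$\eta=\Big[\rho-\sum_{m=1}^N\alpha_mS_m\Big]^+$$ for some $\alpha_m\ge0$ with $\sum_m\alpha_m=1$. Furthermore, $\alpha_m>0$ implies $\eta\in C_{S_m}$, where $C_S=\{x\in\mathbb{R}^Q:\langle S,\Delta x\rangle=\max_{S'\in\mathcal{S}}\langle S',\Delta x\rangle\}$.
   Context: Model: $Q$ queues, finite set $\mathcal{S}=\{S_1,\dots,S_N\}\subset\mathbb{R}^Q_{\ge0}$, discrete time. Arrivals $A(t)$ with $0\le A_q(t)\le\bar A_q<\infty$ and $\rho_q=\lim_{t\to\infty}\frac1t\sum_{s=0}^{t-1}A_q(s)\in(0,\infty)$. Departures $D_q(t)=\min\{S_q(t),X_q(t)\}$, $X(t+1)=X(t)+A(t)-D(t)$, $X(0)=0$, with $S(t)\in\arg\max_{S\in\mathcal{S}}\langle S,\Delta X(t)\rangle$. $[x]^+$ is the componentwise positive part. Stability region $\mathcal{P}=\{r\in\mathbb{R}^Q_{\ge0}: r\le\sum_n\alpha_nS_n\text{ for some }\alpha_n\ge0,\sum_n\alpha_n=1\}$. (Under these assumptions $\lim_t X(t)/t$ exists.) *)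

(* Defs.v *)
From HB Require Import structures.
From mathcomp Require Import all_boot all_order all_algebra.
From mathcomp Require Import all_classical all_reals all_analysis.
Set Implicit Arguments. Unset Strict Implicit. Unset Printing Implicit Defensive.
Import Order.TTheory GRing.Theory Num.Theory.
Import numFieldNormedType.Exports.
Local Open Scope ring_scope.

Section QDefs.
Variables (R : realType) (Q N : nat).

(* weighted inner product <S, Delta x> with Delta = diag(delta) *)
Definition wip (delta : 'I_Q -> R) (s x : 'I_Q -> R) : R :=
  \sum_(q < Q) s q * (delta q * x q).

Definition in_stab_region (S : 'I_N -> 'I_Q -> R) (r : 'I_Q -> R) : Prop :=
  (forall q, 0 <= r q) /\
  exists alpha : 'I_N -> R,
    (forall n, 0 <= alpha n) /\ \sum_(n < N) alpha n = 1 /\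
    forall q, r q <= \sum_(n < N) alpha n * S n q.

Definition in_cone (S : 'I_N -> 'I_Q -> R) (delta : 'I_Q -> R) (n : 'I_N)
    (x : 'I_Q -> R) : Prop :=
  forall n' : 'I_N, wip delta (S n') x <= wip delta (S n) x.

(* MaxWeight dynamics: sched t is the index of the chosen schedule S(t) *)
Definition maxweight_dynamics (S : 'I_N -> 'I_Q -> R) (delta : 'I_Q -> R)
    (A X : nat -> 'I_Q -> R) (sched : nat -> 'I_N) : Prop :=
  (forall q, X 0%N q = 0) /\
  (forall t q, X t.+1 q = X t q + A t q - Num.min (S (sched t) q) (X t q)) /\
  (forall t, in_cone S delta (sched t) (X t)).

End QDefs.

(* Main.v *)
Require Import Defs.
From HB Require Import structures.
From mathcomp Require Import all_boot all_order all_algebra.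
From mathcomp Require Import all_classical all_reals all_analysis.
From mathcomp Require Import ring lra zify.
Import Order.TTheory GRing.Theory Num.Theory.
Import numFieldNormedType.Exports.
Local Open Scope classical_set_scope.
Local Open Scope ring_scope.

Lemma ev_lt (R : realType) (f : nat -> R) l e : f @ \oo --> l -> 0 < e ->
  exists T, forall t, (T <= t)%N -> `|l - f t| < e.
Proof. move=> /cvgrPdist_lt H e0. have := H e e0. move=> [T _ HT]. exists T => t Ht. exact: HT. Qed.

Lemma cluster_box (R : realType) N (b : nat -> 'rV[R]_N) :
  (forall t i, 0 <= b t ord0 i <= 1) ->
  exists a : 'rV[R]_N, (forall i, 0 <= a ord0 i <= 1) /\
    forall e, 0 < e -> forall T, exists t, (T <= t)%N /\
      forall i, `|a ord0 i - b t ord0 i| < e.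
Proof.
move=> hb.
have C := @rV_compact R N (fun _ => `[0, 1]%classic) (fun _ => @segment_compact R 0 1).
have : (b @ \oo) [set v : 'rV[R]_N | forall i, `[0, 1]%classic (v ord0 i)].
  exists 0%N => // t _ i /=. by rewrite in_itv /= hb.
move=> /C [a [Ha Hcl]].
exists a; split.
  by move=> i; have := Ha i; rewrite /= in_itv.
move=> e e0 T.
have : (b @ \oo) (b @` [set t | (T <= t)%N]).
  exists T => // t Ht /=. by exists t.
move=> /(Hcl _ _) /(_ (nbhsx_ballx a e e0)) [_ [[t Ht <-] Hb]].
exists t; split => // i.
by case: Hb => _ /(_ ord0 i).
Qed.

Lemma small_le (R : realType) (x y c : R) : 0 <= c ->
  (forall e, 0 < e -> x <= y + e * c) -> x <= y.
Proof.
move=> c0 H; apply/ler_addgt0Pr => e e0.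
have c1 : 0 < c + 1 by lra.
have h := H (e / (c + 1)) (divr_gt0 e0 c1).
apply: le_trans h _; rewrite lerD2l mulrAC ler_pdivrMr //.
rewrite ler_wpM2l; lra.
Qed.

Lemma sum_approx (R : realType) N (a b w : 'I_N -> R) e :
  (forall n, `|a n - b n| < e) -> (forall n, 0 <= w n) ->
  `|\sum_n a n * w n - \sum_n b n * w n| <= e * \sum_n w n.
Proof.
move=> hab hw; rewrite -sumrB big_distrr /=.
apply: le_trans (ler_norm_sum _ _ _) _; apply: ler_sum => n _.
rewrite -mulrBl normrM (ger0_norm (hw n)).
by apply: ler_wpM2r => //; apply: ltW.
Qed.

Lemma archi_nat (R : realType) (c : R) : exists T, forall t, (T <= t)%N -> c < t%:R.
Proof.
exists (Num.truncn c).+1 => t Ht.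
apply: lt_le_trans (truncnS_gt c) _; by rewrite ler_nat.
Qed.

Lemma tail_sum (R : realType) (f : nat -> R) M T : 0 <= M ->
  (forall s, f s <= M) -> (forall s, (T <= s)%N -> f s <= 0) ->
  forall t, \sum_(s < t) f s <= T%:R * M.
Proof.
move=> M0 hM hT t.
suff : \sum_(s < t) f s <= (minn t T)%:R * M.
  move=> h; apply: le_trans h _; apply: ler_wpM2r => //; rewrite ler_nat; lia.
elim: t => [|t IH]; first by rewrite big_ord0 min0n mul0r.
rewrite big_ord_recr /=.
case: (ltnP t T) => h.
  have -> : minn t.+1 T = (minn t T).+1 by lia.
  rewrite -natr1 mulrDl mul1r; exact: lerD.
have -> : minn t.+1 T = minn t T by lia.
have := hT t h; lra.
Qed.

Lemma common_T (Q : nat) (P : 'I_Q -> nat -> Prop) :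
  (forall q, exists T, forall t, (T <= t)%N -> P q t) ->
  exists T, forall t, (T <= t)%N -> forall q, P q t.
Proof.
move/choice => [f Hf]; exists (\max_q f q) => t Ht q; apply: Hf.
exact: leq_trans (leq_bigmax q) Ht.
Qed.

Arguments ev_lt {R f l e}.
Arguments sum_approx {R N a b w e}.
Arguments archi_nat {R}.
Arguments small_le {R x y c}.

Theorem lemma8 (R : realType) (Q N : nat)
  (S : 'I_N -> 'I_Q -> R) (delta : 'I_Q -> R)
  (A X : nat -> 'I_Q -> R) (sched : nat -> 'I_N)
  (rho eta : 'I_Q -> R) :
  (forall n q, 0 <= S n q) ->
  (forall q, 0 < delta q) ->
  (exists Abar : 'I_Q -> R, forall t q, 0 <= A t q <= Abar q) ->
  (forall q, 0 < rho q) ->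
  (forall q, (fun t : nat => (\sum_(s < t) A s q) / t%:R) @ \oo --> rho q) ->
  maxweight_dynamics S delta A X sched ->
  ~ in_stab_region S rho ->
  (forall q, (fun t : nat => X t q / t%:R) @ \oo --> eta q) ->
  exists alpha : 'I_N -> R,
    (forall n, 0 <= alpha n) /\ \sum_(n < N) alpha n = 1 /\
    (forall q, eta q = Num.max 0 (rho q - \sum_(n < N) alpha n * S n q)) /\
    (forall n, 0 < alpha n -> in_cone S delta n eta).
Proof.
move=> S0 d0 [Ab HA] r0 HrA [X0 [HX Hcone]] Hnst Heta.
have A0 : forall t q, 0 <= A t q by move=> t q; case/andP: (HA t q).
pose D s q := Num.min (S (sched s) q) (X s q).
have Xge0 : forall t q, 0 <= X t q.
  elim=> [|t IH] q; first by rewrite X0.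
  rewrite HX; have h : Num.min (S (sched t) q) (X t q) <= X t q by rewrite ge_min lexx orbT.
  have := A0 t q; have := IH q; lra.
have DleS : forall s q, D s q <= S (sched s) q by move=> s q; rewrite /D ge_min lexx.
have Dge0 : forall s q, 0 <= D s q by move=> s q; rewrite /D le_min S0 Xge0.
have Xsum : forall t q, X t q = \sum_(s < t) A s q - \sum_(s < t) D s q.
  elim=> [|t IH] q; first by rewrite X0 !big_ord0 subr0.
  rewrite HX !big_ord_recr /=; have := IH q; rewrite /D; lra.
pose cnt t n := \sum_(s < t) ((sched s == n)%:R : R).
have cntS : forall t q, \sum_(s < t) S (sched s) q = \sum_n cnt t n * S n q.
  move=> t q; rewrite /cnt; under [RHS]eq_bigr do rewrite mulr_suml.
  rewrite exchange_big /=; apply: eq_bigr => s _.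
  rewrite (bigD1 (sched s)) //= eqxx mul1r big1 ?addr0 // => n hn.
  by rewrite eq_sym (negbTE hn) mul0r.
have cnt_sum : forall t, \sum_n cnt t n = t%:R.
  move=> t; rewrite /cnt exchange_big /=.
  rewrite (eq_bigr (fun _ => 1)); first by rewrite sumr_const card_ord.
  move=> s _; rewrite (bigD1 (sched s)) //= eqxx big1 ?addr0 // => n hn.
  by rewrite eq_sym (negbTE hn).
have cnt0 : forall t n, 0 <= cnt t n by move=> t n; apply: sumr_ge0 => s _; rewrite ler0n.
have cntle : forall t n, cnt t n <= t%:R.
  move=> t n; rewrite -(cnt_sum t) (bigD1 n) //= lerDl; apply: sumr_ge0 => *; exact: cnt0.
pose beta t := \row_n (cnt t n / t%:R) : 'rV[R]_N.
have hbox : forall t n, 0 <= beta t ord0 n <= 1.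
  move=> t n; rewrite mxE; case: t => [|t]; first by rewrite invr0 mulr0 lexx ler01.
  by rewrite divr_ge0 ?cnt0 ?ler0n //= ler_pdivrMr ?ltr0Sn // mul1r cntle.
have [a0 [Ha0 Happ]] := @cluster_box R N beta hbox.
pose alpha n := a0 ord0 n.
have app : forall e, 0 < e -> forall T, exists t, (T <= t)%N /\ (0 < t)%N /\
    forall n, `|alpha n - cnt t n / t%:R| < e.
  move=> e e0 T; have [t [Ht H]] := Happ e e0 (maxn T 1).
  exists t; split; first lia. split; first lia. by move=> n; have := H n; rewrite mxE.
have alpha0 : forall n, 0 <= alpha n by move=> n; case/andP: (Ha0 n).
pose cumD t q := \sum_(s < t) D s q.
have Dcvg : forall q e, 0 < e -> exists T, forall t, (T <= t)%N ->
    `|(rho q - eta q) - cumD t q / t%:R| < e.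
  move=> q e e0; have e2 : 0 < e / 2 by lra.
  have [T1 H1] := ev_lt (HrA q) e2.
  have [T2 H2] := ev_lt (Heta q) e2.
  exists (maxn T1 T2) => t Ht.
  have h1 := H1 t ltac:(lia). have h2 := H2 t ltac:(lia).
  have -> : cumD t q / t%:R = (\sum_(s<t) A s q)/t%:R - X t q / t%:R.
    by rewrite (Xsum t q) /cumD; ring.
  move: h1 h2; rewrite !ltr_norml => /andP[? ?] /andP[? ?]; apply/andP; split; lra.
have eta0 : forall q, 0 <= eta q.
  move=> q; rewrite leNgt; apply/negP => hq.
  have e0 : 0 < - eta q by lra.
  have [T H] := ev_lt (Heta q) e0.
  have := H T (leqnn T); have : 0 <= X T q / T%:R by rewrite divr_ge0 ?Xge0 ?ler0n.
  move=> h; rewrite ltr_norml => /andP[h1 h2]; lra.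
have divsum : forall t q, \sum_n (cnt t n / t%:R) * S n q =
    (\sum_n cnt t n * S n q) / t%:R.
  by move=> t q; rewrite mulr_suml; apply: eq_bigr => n _; ring.
have Mge0 : forall q, 0 <= \sum_n S n q by move=> q; apply: sumr_ge0 => n _; exact: S0.
have c1 : forall q, rho q - eta q <= \sum_n alpha n * S n q.
  move=> q; apply: (@small_le _ _ _ ((\sum_n S n q) + 1)); first by have := Mge0 q; lra.
  move=> e e0; have [T HT] := Dcvg q e e0.
  have [t [Ht [t0 Hn]]] := app e e0 T.
  have h1 := HT t Ht.
  have h2 := sum_approx (w := fun n => S n q) Hn (fun n => S0 n q).
  have h3 : cumD t q / t%:R <= \sum_n (cnt t n / t%:R) * S n q.
    rewrite divsum; apply: ler_wpM2r; first by rewrite invr_ge0 ler0n.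
    by rewrite /cumD -cntS; apply: ler_sum => s _; exact: DleS.
  move: h1 h2; rewrite ltr_norml ler_norml /= => /andP[? ?] /andP[? ?].
  have -> : e * ((\sum_n S n q) + 1) = e * (\sum_n S n q) + e by ring.
  lra.
have c2 : forall q, 0 < eta q -> \sum_n alpha n * S n q <= rho q - eta q.
  move=> q hq.
  have [T0 HT0] : exists T0, forall s, (T0 <= s)%N -> S (sched s) q <= X s q.
    have e0 : 0 < eta q / 2 by lra.
    have [T1 H1] := ev_lt (Heta q) e0.
    have [T2 H2] := archi_nat (2 * (\sum_n S n q) / eta q).
    exists (maxn (maxn T1 T2) 1) => s Hs.
    have h1 := H1 s ltac:(lia). have h2 := H2 s ltac:(lia).
    have sp : 0 < s%:R :> R by rewrite ltr0n; lia.
    have SM : S (sched s) q <= \sum_n S n q.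
      by rewrite (bigD1 (sched s)) //= lerDl; apply: sumr_ge0 => *; exact: S0.
    move: h1; rewrite ltr_norml => /andP[_ h1].
    have h3 : eta q / 2 < X s q / s%:R by lra.
    rewrite ltr_pdivrMr // in h2.
    rewrite ltr_pdivlMr // in h3.
    nra.
  have Dtail : forall t, \sum_(s < t) (S (sched s) q - D s q) <= T0%:R * \sum_n S n q.
    apply: (@tail_sum R (fun s => S (sched s) q - D s q)); first exact: Mge0.
      move=> s; have := Dge0 s q.
      have : S (sched s) q <= \sum_n S n q.
        by rewrite (bigD1 (sched s)) //= lerDl; apply: sumr_ge0 => *; exact: S0.
      lra.
    by move=> s hs; rewrite /D min_l ?HT0 // subrr.
  have hlow : forall t, (\sum_n cnt t n * S n q) - T0%:R * \sum_n S n q <= cumD t q.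
    move=> t; rewrite -cntS; have := Dtail t; rewrite sumrB /cumD; lra.
  apply: (@small_le _ _ _ ((\sum_n S n q) + 2)); first by have := Mge0 q; lra.
  move=> e e0.
  have [T HT] := Dcvg q e e0.
  have [T3 H3] := archi_nat (T0%:R * (\sum_n S n q) / e).
  have [t [Ht [t0 Hn]]] := app e e0 (maxn T T3).
  have h1 := HT t ltac:(lia).
  have h3 := H3 t ltac:(lia).
  have tp : 0 < t%:R :> R by rewrite ltr0n.
  have h2 := sum_approx (w := fun n => S n q) Hn (fun n => S0 n q).
  have h4 : (\sum_n cnt t n * S n q) / t%:R - T0%:R * (\sum_n S n q) / t%:R
      <= cumD t q / t%:R.
    by rewrite -mulrBl; apply: ler_wpM2r; [rewrite invr_ge0 ler0n | exact: hlow].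
  have h5 : T0%:R * (\sum_n S n q) / t%:R < e.
    rewrite ltr_pdivrMr // in h3; rewrite ltr_pdivrMr //; lra.
  rewrite divsum in h2.
  move: h1 h2; rewrite ltr_norml ler_norml /= => /andP[? ?] /andP[? ?].
  have -> : e * ((\sum_n S n q) + 2) = e * (\sum_n S n q) + e + e by ring.
  lra.
have sum1 : \sum_n alpha n = 1.
  have key : forall e, 0 < e -> `|\sum_n alpha n - 1| <= e * N%:R.
    move=> e e0; have [t [_ [t0 Hn]]] := app e e0 0%N.
    have h := sum_approx (w := fun _ => 1) Hn (fun _ => ler01).
    rewrite sumr_const card_ord in h.
    have E1 : \sum_n alpha n * 1 = \sum_n alpha n by apply: eq_bigr => n _; rewrite mulr1.
    have E2 : \sum_n cnt t n / t%:R * 1 = \sum_n cnt t n / t%:R.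
      by apply: eq_bigr => n _; rewrite mulr1.
    rewrite E1 E2 in h.
    by rewrite -mulr_suml cnt_sum divff ?pnatr_eq0 -?lt0n in h.
  apply/eqP; rewrite eq_le; apply/andP; split.
    apply: (@small_le _ _ _ N%:R); first exact: ler0n.
    by move=> e e0; have := key e e0; rewrite ler_norml => /andP[_ ?]; lra.
  apply: (@small_le _ _ _ N%:R); first exact: ler0n.
  by move=> e e0; have := key e e0; rewrite ler_norml => /andP[? _]; lra.
exists alpha; split => //; split => //; split.
  move=> q; have h1 := c1 q; have := eta0 q; rewrite le_eqVlt => /orP [/eqP h0|hq].
    rewrite -h0 in h1 *; rewrite max_l //; lra.
  have h2 := c2 q hq; rewrite max_r; lra.
move=> n an; apply: contrapT => hn.
rewrite /in_cone in hn; move/existsNP: hn => [n' hn'].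
have hlt : wip delta (S n) eta < wip delta (S n') eta by rewrite ltNge; apply/negP.
pose w q := (S n' q - S n q) * delta q.
pose c := wip delta (S n') eta - wip delta (S n) eta.
have cdef : c = \sum_q w q * eta q.
  by rewrite /c /wip -sumrB; apply: eq_bigr => q _; rewrite /w; ring.
have c0 : 0 < c by rewrite /c; lra.
pose W := \sum_q `|w q|.
have W0 : 0 <= W by apply: sumr_ge0 => q _; exact: normr_ge0.
pose e := c / (W + 1).
have e0 : 0 < e by apply: divr_gt0; lra.
have [T HT] := @common_T Q (fun q t => `|eta q - X t q / t%:R| < e)
  (fun q => ev_lt (Heta q) e0).
have hsched : forall t, (maxn T 1 <= t)%N -> sched t != n.
  move=> t ht; apply/eqP => hs.
  have tp : 0 < t%:R :> R by rewrite ltr0n; lia.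
  have hc := Hcone t n'; rewrite hs in hc.
  have gdef : (wip delta (S n') (X t) - wip delta (S n) (X t)) / t%:R =
      \sum_q w q * (X t q / t%:R).
    by rewrite /wip -sumrB mulr_suml; apply: eq_bigr => q _; rewrite /w; ring.
  have gle : \sum_q w q * (X t q / t%:R) <= 0.
    by rewrite -gdef; apply: mulr_le0_ge0; [lra | rewrite invr_ge0 ler0n].
  have hb : `|c - \sum_q w q * (X t q / t%:R)| <= W * e.
    rewrite cdef -sumrB.
    apply: le_trans (ler_norm_sum _ _ _) _; rewrite /W mulr_suml; apply: ler_sum => q _.
    rewrite -mulrBr normrM; apply: ler_wpM2l => //; apply: ltW.
    exact: (HT t ltac:(lia) q).
  have hWe : W * e < c.
    by rewrite /e mulrA ltr_pdivrMr; [nra|lra].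
  move: hb; rewrite ler_norml => /andP[_ h]; lra.
pose T' := maxn T 1.
have cntb : forall t, cnt t n <= T'%:R.
  move=> t.
  have := @tail_sum R (fun s => ((sched s == n)%:R : R)) 1 T' ler01 _ _ t.
  rewrite mulr1; apply.
    by move=> s; case: (sched s == n); rewrite ?ler01 ?lexx.
  by move=> s hs; rewrite (negbTE (hsched s hs)).
have a2 : 0 < alpha n / 2 by lra.
have [T3 H3] := archi_nat (2 * T'%:R / alpha n).
have [t [Ht [t0 Hn]]] := app _ a2 T3.
have h3 := H3 t Ht; rewrite ltr_pdivrMr // in h3.
have tp : 0 < t%:R :> R by rewrite ltr0n.
have hc : cnt t n / t%:R <= T'%:R / t%:R.
  by apply: ler_wpM2r; [rewrite invr_ge0 ler0n | exact: cntb].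
have : T'%:R / t%:R < alpha n / 2 by rewrite ltr_pdivrMr //; nra.
move: (Hn n); rewrite ltr_norml => /andP[_ h].
lra.
Qed.
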